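(* Let $z_1,\dots,z_{\ell+1}$ be the generators of the $*$-algebra $\mathcal{A}(S^{2\ell+1}_q)$. Then for every $N\in\mathbb{N}$, $$\sum_{j_1+\dots+j_{\ell+1}=N}[j_1,\dots,j_{\ell+1}]!\;z_1^{j_1}\cdots z_{\ell+1}^{j_{\ell+1}}\big(z_1^{j_1}\cdots z_{\ell+1}^{j_{\ell+1}}\big)^*=1,$$ the sum running over $(j_1,\dots,j_{\ell+1})\in\mathbb{N}^{\ell+1}$.
   Context: $0<q<1$, $\ell\ge1$, $[x]=\frac{q^x-q^{-x}}{q-q^{-1}}$, $[n]!=[n]\cdots[1]$, $[0]!=1$, and $[j_1,\dots,j_{\ell+1}]!:=\frac{[j_1+\dots+j_{\ell+1}]!}{[j_1]!\cdots[j_{\ell+1}]!}q^{-\sum_{r<s}j_rj_s}$. $\mathcal{A}(S^{2\ell+1}_q)$ is the $*$-algebra generated by $z_i,z_i^*$ ($1\le i\le\ell+1$) with relations $z_iz_j=qz_jz_i$ ($i<j$), $z_i^*z_j=qz_jz_i^*$ ($i\ne j$), $[z_1^*,z_1]=0$, $[z_{i+1}^*,z_{i+1}]=(1-q^2)\sum_{j=1}^iz_jz_j^*$ ($1\le i\le\ell$), and $\sum_{i=1}^{\ell+1}z_iz_i^*=1$. *)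

(* Defs.v *)
From HB Require Import structures.
From mathcomp Require Import all_boot all_order all_algebra.
Set Implicit Arguments. Unset Strict Implicit. Unset Printing Implicit Defensive.
Import Order.TTheory GRing.Theory Num.Theory.
Local Open Scope ring_scope.

Definition qnum (R : fieldType) (q : R) (n : nat) : R :=
  (q ^+ n - q ^- n) / (q - q^-1).

Definition qfact (R : fieldType) (q : R) (n : nat) : R :=
  \prod_(1 <= k < n.+1) qnum q k.

Definition qmultinom (R : fieldType) (q : R) (m : nat) (j : 'I_m -> nat) : R :=
  qfact q (\sum_(r < m) j r) / (\prod_(r < m) qfact q (j r))
  * q ^- (\sum_(r < m) \sum_(s < m | (r < s)%N) (j r * j s))%N.

Definition is_star (R : fieldType) (A : algType R) (star : A -> A) : Prop :=
  [/\ forall x y, star (x + y) = star x + star y,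
      forall (c : R) x, star (c *: x) = c *: star x,
      forall x y, star (x * y) = star y * star x,
      star 1 = 1 &
      forall x, star (star x) = x].

(* The defining relations of A(S^{2l+1}_q), generators indexed by 'I_(l+1),
   0-based: z_{i+1} of the paper is z i. *)
Definition qsphere_rel (R : fieldType) (q : R) (l : nat) (A : algType R)
    (star : A -> A) (z : 'I_l.+1 -> A) : Prop :=
  [/\ forall i j : 'I_l.+1, (i < j)%N -> z i * z j = q *: (z j * z i),
      forall i j : 'I_l.+1, i != j -> star (z i) * z j = q *: (z j * star (z i)),
      star (z ord0) * z ord0 - z ord0 * star (z ord0) = 0,
      forall k : 'I_l.+1, (0 < k)%N ->
        star (z k) * z k - z k * star (z k)
        = (1 - q ^+ 2) *: \sum_(j < l.+1 | (j < k)%N) z j * star (z j) &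
      \sum_(i < l.+1) z i * star (z i) = 1].

Definition zmon (R : fieldType) (l : nat) (A : algType R)
    (z : 'I_l.+1 -> A) (j : 'I_l.+1 -> nat) : A :=
  \prod_(i < l.+1) z i ^+ j i.

(* Main.v *)
Require Import Defs.
From HB Require Import structures.
From mathcomp Require Import all_boot all_order all_algebra.
From mathcomp Require Import ring zify.
From Stdlib Require Import FunctionalExtensionality.
Import Order.TTheory GRing.Theory Num.Theory.
Set Implicit Arguments. Unset Strict Implicit. Unset Printing Implicit Defensive.
Local Open Scope ring_scope.
Lemma xpow_comm (R : fieldType) (A : algType R) (c : R) (x y : A) :
  x * y = c *: (y * x) -> forall a, x ^+ a * y = c ^+ a *: (y * x ^+ a).
Proof.
move=> H; elim=> [|a IH]; first by rewrite !expr0 scale1r mul1r mulr1.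
rewrite exprSr -mulrA H -scalerAr (mulrA (x ^+ a)) IH -scalerAl scalerA -exprS.
by rewrite mulrA.
Qed.

Lemma prod_shift (R : fieldType) (A : algType R) (c : R) n (y : 'I_n -> A)
   (f : 'I_n -> nat) (i : 'I_n) :
 (forall a b : 'I_n, (a < b)%N -> y b * y a = c *: (y a * y b)) ->
 (\prod_(k < n) y k ^+ f k) * y i
   = c ^+ (\sum_(k < n | (i < k)%N) f k) *: \prod_(k < n) y k ^+ (f k + (k == i)).
Proof.
elim: n y f i => [|n IH] y f i H; first by case: i.
rewrite !big_ord_recr /=.
have [->|ne] := eqVneq i ord_max.
  rewrite [\sum_(_ < _ | _) _]big1 ?expr0 ?scale1r; last by move=> k; rewrite ltnNge -ltnS ltn_ord.
  rewrite addn1 exprSr mulrA; congr (_ * _ * _).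
  apply: eq_bigr => k _; congr (_ ^+ _).
  by rewrite -[LHS]addn0; congr (_ + _); apply/esym/eqP; rewrite eqb0 -val_eqE /= neq_ltn ltn_ord.
have hi : (i < n)%N by rewrite ltn_neqAle -ltnS ltn_ord andbT; move: ne; rewrite -val_eqE.
pose i' : 'I_n := Ordinal hi.
have -> : i = widen_ord (leqnSn n) i' by apply: val_inj.
rewrite [\sum_(_ < _ | _) _]big_mkcond /= [\sum_(_ < _) _]big_ord_recr /= hi -mulrA (@xpow_comm _ _ _ _ _ (H (widen_ord (leqnSn n) i') ord_max _)) /=; last by [].
rewrite -scalerAr mulrA.
have := IH (fun k => y (widen_ord (leqnSn n) k)) (fun k => f (widen_ord (leqnSn n) k)) i'.
move=> ->; last by move=> a b ab; apply: H.
rewrite -scalerAl scalerA -exprD addnC -big_mkcond /=.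
rewrite addn0; congr (_ ^+ _ *: (_ * _)).
Qed.
Lemma telescope (R : comRingType) (q r : R) n (f : 'I_n -> nat) :
 q ^+ (\sum_(k<n) f k) - r ^+ (\sum_(k<n) f k) =
 \sum_(i < n) (q ^+ f i - r ^+ f i) *
    (q ^+ (\sum_(k < n | (k < i)%N) f k) * r ^+ (\sum_(k < n | (i < k)%N) f k)).
Proof.
elim: n f => [|n IH] f; first by rewrite !big_ord0 subrr.
rewrite [\sum_(i < n.+1) (_ * _)]big_ord_recr /= !big_ord_recr /=.
have E1 : forall i : 'I_n, (\sum_(k < n.+1 | (k < i)%N) f k
   = \sum_(k < n | (k < i)%N) f (widen_ord (leqnSn n) k))%N.
  move=> i; rewrite big_mkcond big_ord_recr /= ltnNge ltnW //= addn0.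
  by rewrite -big_mkcond.
have E2 : forall i : 'I_n, (\sum_(k < n.+1 | (i < k)%N) f k
   = \sum_(k < n | (i < k)%N) f (widen_ord (leqnSn n) k) + f ord_max)%N.
  move=> i; rewrite big_mkcond big_ord_recr /= ltn_ord.
  by rewrite -big_mkcond.
have E3 : (\sum_(k < n.+1 | (k < n)%N) f k = \sum_(k < n) f (widen_ord (leqnSn n) k))%N.
  rewrite big_mkcond big_ord_recr /= ltnn addn0.
  by apply: eq_bigr => k _; rewrite /= ltn_ord.
have E4 : (\sum_(k < n.+1 | (n < k)%N) f k = 0)%N.
  by rewrite big1 // => k; rewrite ltnNge -ltnS ltn_ord.
under [\sum_(i < n) (_ * _)]eq_bigr => i _ do rewrite E1 E2 exprD mulrA mulrA.
rewrite E3 E4 expr0 mulr1 -big_distrl /=.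
have := IH (fun k => f (widen_ord (leqnSn n) k)).
under [\sum_(i < n) (_ * _)]eq_bigr => i _ do rewrite mulrA.
move=> <-.
rewrite !exprD; ring.
Qed.

Definition upd n (f : 'I_n -> nat) (i : 'I_n) := fun k => (f k + (k == i))%N.
Definition ee n (f : 'I_n -> nat) :=
  (\sum_(r < n) \sum_(s < n | (r < s)%N) (f r * f s))%N.

Lemma sum_delta n (i : 'I_n) (g : 'I_n -> nat) :
  (\sum_(k < n) ((k == i) * g k) = g i)%N.
Proof.
rewrite (bigD1 i) //= eqxx mul1n big1 ?addn0 // => k /negbTE ->.
by rewrite mul0n.
Qed.

Lemma sum_ind n (i : 'I_n) (P : pred 'I_n) :
  (\sum_(k < n | P k) (k == i) = P i)%N.
Proof.
rewrite big_mkcond (bigD1 i) //= eqxx big1 ?addn0; first by case: (P i).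
by move=> k /negbTE ->; case: (P k).
Qed.

Lemma ee_upd n (f : 'I_n -> nat) (i : 'I_n) :
  ee (upd f i) = (ee f + \sum_(k < n | (k < i)%N) f k + \sum_(k < n | (i < k)%N) f k)%N.
Proof.
rewrite /ee /upd.
have E : forall r : 'I_n, (\sum_(s < n | (r < s)%N) ((f r + (r == i)) * (f s + (s == i)))
  = \sum_(s < n | (r < s)%N) (f r * f s) + (r == i) * \sum_(s < n | (r < s)%N) f s
    + f r * (r < i) + (r == i) * (r < i))%N.
  move=> r.
  under eq_bigr => s _ do rewrite mulnDl !mulnDr.
  rewrite !big_split /= -!big_distrr /= !sum_ind; lia.
rewrite (eq_bigr _ (fun r _ => E r)) !big_split /= sum_delta sum_delta ltnn addn0.
rewrite -addnA -addnA; congr (_ + _)%N; rewrite addnC; congr (_ + _)%N.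
by rewrite [RHS]big_mkcond; apply: eq_bigr => k _; case: (k < i)%N; rewrite ?muln1 ?muln0.
Qed.

Lemma qpow_neq (R : realFieldType) (q : R) k : 0 < q -> q < 1 -> (0 < k)%N ->
  q ^+ k - q ^- k != 0.
Proof.
move=> q0 q1 k0; rewrite subr_eq0; apply/negP => /eqP E.
have h1 : q ^+ k < 1 by rewrite exprn_ilt1 ?ltW // -lt0n.
have h2 : 1 < q ^- k by rewrite invf_gt1 ?exprn_gt0.
have := lt_trans h1 h2; rewrite lt_def => /andP[ne _]. move: ne. rewrite eq_sym. by move/eqP.
Qed.

Lemma qnum_neq0 (R : realFieldType) (q : R) k : 0 < q -> q < 1 -> (0 < k)%N ->
  qnum q k != 0.
Proof.
move=> q0 q1 k0; rewrite /qnum mulf_neq0 ?invr_neq0 ?qpow_neq //.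
by have := qpow_neq q0 q1 (isT : (0 < 1)%N); rewrite expr1.
Qed.

Lemma qfactS (R : fieldType) (q : R) k : qfact q k.+1 = qnum q k.+1 * qfact q k.
Proof. by rewrite /qfact big_nat_recr //= mulrC. Qed.

Lemma qfact_neq0 (R : realFieldType) (q : R) k : 0 < q -> q < 1 -> qfact q k != 0.
Proof.
move=> q0 q1; elim: k => [|k IH]; first by rewrite /qfact big_geq ?oner_neq0.
by rewrite qfactS mulf_neq0 ?qnum_neq0.
Qed.

Lemma qnum_sum (R : fieldType) (q : R) n (f : 'I_n -> nat) :
  qnum q (\sum_(k < n) f k)%N = \sum_(i < n) qnum q (f i) *
    (q ^+ (\sum_(k < n | (k < i)%N) f k) * q ^- (\sum_(k < n | (i < k)%N) f k)).
Proof.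
rewrite /qnum -!exprVn telescope mulr_suml; apply: eq_bigr => i _.
by rewrite -!exprVn mulrAC.
Qed.

Lemma qmultinom_rec (R : realFieldType) (q : R) (q0 : 0 < q) (q1 : q < 1) n
  (f : 'I_n -> nat) : (0 < \sum_(k < n) f k)%N ->
 qmultinom q f = \sum_(i < n | (0 < f i)%N)
   qmultinom q (fun k => f k - (k == i))%N *
    (q ^- (\sum_(k < n | (i < k)%N) f k) * q ^- (\sum_(k < n | (i < k)%N) f k)).
Proof.
move=> S0.
have HS : qfact q (\sum_(k < n) f k)%N
   = qnum q (\sum_(k < n) f k)%N * qfact q (\sum_(k < n) f k)%N.-1.
  by rewrite -{1}(prednK S0) qfactS prednK.
rewrite {1}/qmultinom HS qnum_sum !mulr_suml [RHS]big_mkcond.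
apply: eq_bigr => i _.
case: (ltnP 0 (f i)) => fi; last first.
  have -> : f i = 0%N by lia.
  by rewrite /qnum expr0 invr1 subrr !mul0r.
pose g := fun k => (f k - (k == i))%N.
have fg : f = upd g i.
  apply: functional_extensionality => k; rewrite /upd /g.
  by case: eqP => [->|]; lia.
have Sg : (\sum_(k < n) g k)%N = (\sum_(k < n) f k)%N.-1.
  rewrite fg /upd big_split /= (sum_ind i predT) /=; lia.
have Dg : \prod_(k < n) qfact q (f k) = qnum q (f i) * \prod_(k < n) qfact q (g k).
  rewrite (bigD1 i) //= [in RHS](bigD1 i) //= mulrA; congr (_ * _).
    by rewrite /g eqxx subn1 -{1}(prednK fi) qfactS prednK.
  by apply: eq_bigr => k /negbTE kn; rewrite /g kn subn0.
have Lg : (\sum_(k < n | (k < i)%N) g k = \sum_(k < n | (k < i)%N) f k)%N.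
  by apply: eq_bigr => k ki; rewrite /g; case: eqP => [e|]; [move: ki; rewrite e ltnn|]; lia.
have Rg : (\sum_(k < n | (i < k)%N) g k = \sum_(k < n | (i < k)%N) f k)%N.
  by apply: eq_bigr => k ki; rewrite /g; case: eqP => [e|]; [move: ki; rewrite e ltnn|]; lia.
have Eg : ee f = (ee g + \sum_(k < n | (k < i)%N) f k + \sum_(k < n | (i < k)%N) f k)%N.
  by have := ee_upd g i; rewrite -fg Lg Rg.
rewrite -/g /qmultinom Sg Dg -/(ee f) -/(ee g) Eg.
have an : qnum q (f i) != 0 by rewrite qnum_neq0.
have Pn : \prod_(k < n) qfact q (g k) != 0.
  by apply/prodf_neq0 => k _; rewrite qfact_neq0.
move: an Pn.
set a := qnum q (f i); set P := \prod_(k < n) qfact q (g k).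
set F := qfact q _.
set L := (\sum_(k < n | (k < i)%N) f k)%N.
set Rr := (\sum_(k < n | (i < k)%N) f k)%N.
move=> an Pn; clearbody a P F L Rr.
have qn : forall m, q ^+ m != 0 by move=> m; rewrite expf_neq0 // gt_eqF.
rewrite !exprD !invfM.
field.
by rewrite !qn an Pn.
Qed.

Lemma zmon_step (R : fieldType) (q : R) (q0 : q != 0) l (A : algType R)
  (z : 'I_l.+1 -> A)
  (h1 : forall i j : 'I_l.+1, (i < j)%N -> z i * z j = q *: (z j * z i))
  (f : 'I_l.+1 -> nat) (i : 'I_l.+1) :
  zmon z f * z i = (q^-1) ^+ (\sum_(k < l.+1 | (i < k)%N) f k) *: zmon z (upd f i).
Proof.
rewrite /zmon (@prod_shift _ _ (q^-1)) // => a b ab.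
by rewrite (h1 a b ab) scalerA mulVf // scale1r.
Qed.

Lemma sandwich (R : fieldType) (A : algType R) (star : A -> A) (hstar : is_star star)
  (W x W' : A) (c : R) :
  W * x = c *: W' -> W * (x * star x) * star W = (c * c) *: (W' * star W').
Proof.
case: hstar => sD sZ sM s1 sK E.
rewrite mulrA -mulrA -sM E sZ -scalerAl -scalerAr scalerA.
by [].
Qed.

Lemma step_alg (R : fieldType) (q : R) (q0 : q != 0) l (A : algType R)
  (star : A -> A) (hstar : is_star star) (z : 'I_l.+1 -> A)
  (hrel : qsphere_rel q star z) (f : 'I_l.+1 -> nat) :
  zmon z f * star (zmon z f) = \sum_(i < l.+1)
    ((q^-1) ^+ (\sum_(k < l.+1 | (i < k)%N) f k) * (q^-1) ^+ (\sum_(k < l.+1 | (i < k)%N) f k))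
     *: (zmon z (upd f i) * star (zmon z (upd f i))).
Proof.
case: hrel => h1 _ _ _ hs.
transitivity (zmon z f * (\sum_(i < l.+1) z i * star (z i)) * star (zmon z f)).
  by rewrite hs mulr1.
rewrite mulr_sumr mulr_suml; apply: eq_bigr => i _.
by apply: sandwich => //; apply: zmon_step.
Qed.

Definition incf n M (j : {ffun 'I_n -> 'I_M.+1}) (i : 'I_n) : {ffun 'I_n -> 'I_M.+1} :=
  [ffun k => if k == i then inord (j k).+1 else j k].
Definition decf n M (j : {ffun 'I_n -> 'I_M.+1}) (i : 'I_n) : {ffun 'I_n -> 'I_M.+1} :=
  [ffun k => if k == i then inord (j k).-1 else j k].

Lemma incf_val n M (j : {ffun 'I_n -> 'I_M.+1}) i : (j i < M)%N ->
  forall k, (incf j i k : nat) = (j k + (k == i))%N.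
Proof.
move=> h k; rewrite ffunE; case: eqP => [->|_]; last by rewrite addn0.
by rewrite inordK ?addn1.
Qed.

Lemma decf_val n M (j : {ffun 'I_n -> 'I_M.+1}) i : (0 < j i)%N ->
  forall k, (decf j i k : nat) = (j k - (k == i))%N.
Proof.
move=> h k; rewrite ffunE; case: eqP => [->|_]; last by rewrite subn0.
by rewrite inordK ?subn1 // ltnS (leq_trans (leq_pred _)) // -ltnS ltn_ord.
Qed.

Lemma inc_dec n M (j : {ffun 'I_n -> 'I_M.+1}) i : (0 < j i)%N -> incf (decf j i) i = j.
Proof.
move=> h; have hi : (decf j i i < M)%N.
  by rewrite decf_val // eqxx; have := ltn_ord (j i); lia.
apply/ffunP => k; apply: val_inj; rewrite /= incf_val // decf_val //.
by case: eqP => [->|]; lia.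
Qed.

Lemma dec_inc n M (j : {ffun 'I_n -> 'I_M.+1}) i : (j i < M)%N -> decf (incf j i) i = j.
Proof.
move=> h; have hi : (0 < incf j i i)%N by rewrite incf_val // eqxx; lia.
apply/ffunP => k; apply: val_inj; rewrite /= decf_val // incf_val //.
by case: eqP => [->|]; lia.
Qed.

Lemma sum_ge n (f : 'I_n -> nat) i : (f i <= \sum_(k < n) f k)%N.
Proof. by rewrite (bigD1 i) //= leq_addr. Qed.

Lemma reindex_i (V : zmodType) n M N (i : 'I_n) (H : {ffun 'I_n -> 'I_M.+1} -> V) :
  (N < M)%N ->
  \sum_(m : {ffun 'I_n -> 'I_M.+1} | ((\sum_(k < n) (m k : nat))%N == N.+1) && (0 < m i)%N) H m
  = \sum_(j : {ffun 'I_n -> 'I_M.+1} | (\sum_(k < n) (j k : nat))%N == N) H (incf j i).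
Proof.
move=> NM.
rewrite (reindex_onto (fun j => incf j i) (fun m => decf m i)); last first.
  by move=> m /andP[_ h]; apply: inc_dec.
apply: eq_bigl => j.
case: (ltnP (j i) M) => h.
  rewrite dec_inc // eqxx andbT incf_val // eqxx addn1 ltn0Sn andbT.
  rewrite (eq_bigr _ (fun k _ => incf_val h k)) big_split /= (sum_ind i predT) /=.
  by rewrite addn1 eqSS.
have -> : (incf j i i : nat) = 0%N.
  rewrite ffunE eqxx val_insubd ifF //; apply/negbTE; rewrite -leqNgt ltnS //.
rewrite ltnn andbF /=; apply/esym/negbTE; have := sum_ge (fun k => (j k : nat)) i => /=.
move=> s; apply/eqP => e; move: s; rewrite e => s.
by have := leq_ltn_trans s NM; rewrite ltnNge h.
Qed.

Definition Ssum (R : fieldType) (q : R) l (A : algType R) (star : A -> A)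
  (z : 'I_l.+1 -> A) M N :=
  \sum_(j : {ffun 'I_l.+1 -> 'I_M.+1} | (\sum_(i < l.+1) (j i : nat))%N == N)
     qmultinom q (fun i => (j i : nat)) *:
       (zmon z (fun i => (j i : nat)) * star (zmon z (fun i => (j i : nat)))).

Lemma main_step (R : realFieldType) (q : R) (hq0 : 0 < q) (hq1 : q < 1) l
  (A : algType R) (star : A -> A) (z : 'I_l.+1 -> A) (hstar : is_star star)
  (hrel : qsphere_rel q star z) M N : (N < M)%N ->
  Ssum q star z M N = Ssum q star z M N.+1.
Proof.
move=> NM; have q0 : q != 0 by rewrite gt_eqF.
rewrite /Ssum.
under eq_bigr => j _ do rewrite (step_alg q0 hstar hrel) scaler_sumr.
rewrite exchange_big /=.
under [RHS]eq_bigr => m hm.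
  rewrite (qmultinom_rec hq0 hq1); last by move/eqP: hm => ->.
  rewrite scaler_suml big_mkcond /=.
over.
rewrite [RHS]exchange_big /=.
apply: eq_bigr => i _.
rewrite -big_mkcondr /= reindex_i //.
apply: eq_bigr => j /eqP hj.
have h : (j i < M)%N.
  by have := sum_ge (fun k => (j k : nat)) i; rewrite /= hj => s; apply: leq_ltn_trans s NM.
have E1 : (fun k => (incf j i k : nat)) = upd (fun k => (j k : nat)) i.
  by apply: functional_extensionality => k; rewrite incf_val.
have E2 : (fun k => (incf j i k : nat) - (k == i))%N = (fun k => (j k : nat)).
  by apply: functional_extensionality => k; rewrite incf_val // addnK.
have E3 : (\sum_(k < l.+1 | (i < k)%N) (incf j i k : nat) = \sum_(k < l.+1 | (i < k)%N) j k)%N.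
  apply: eq_bigr => k ik; rewrite incf_val //; case: eqP => [e|]; last by rewrite addn0.
  by move: ik; rewrite e ltnn.
rewrite E2 E3 E1 scalerA -!exprVn.
by [].
Qed.

Lemma main_base (R : realFieldType) (q : R) l
  (A : algType R) (star : A -> A) (z : 'I_l.+1 -> A) (hstar : is_star star) M :
  Ssum q star z M 0 = 1.
Proof.
rewrite /Ssum (bigD1 [ffun _ => ord0]) /=; last by rewrite big1 // => k _; rewrite ffunE.
rewrite big1 ?addr0; last first.
  move=> j /andP[/eqP hj ne]; exfalso; move/eqP: ne; apply; apply/ffunP => k.
  rewrite ffunE; apply: val_inj => /=.
  by have := sum_ge (fun k => (j k : nat)) k; rewrite /= hj; lia.
have -> : (fun i => (([ffun _ => ord0] : {ffun 'I_l.+1 -> 'I_M.+1}) i : nat)) = (fun _ => 0%N).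
  by apply: functional_extensionality => k; rewrite ffunE.
have Z1 : zmon z (fun _ => 0%N) = 1 by rewrite /zmon big1 // => k _; rewrite expr0.
have Q1 : qfact q 0 = 1 by rewrite /qfact big_geq.
have S0 : (\sum_(i < l.+1) 0 = 0)%N by rewrite big1.
have S1 : (\sum_(r < l.+1) \sum_(s < l.+1 | (r < s)%N) (0 * 0) = 0)%N.
  by rewrite big1 // => r _; rewrite big1.
rewrite Z1; case: hstar => _ _ _ -> _.
rewrite /qmultinom S0 S1 Q1 big1 ?invr1 ?expr0 ?mulr1 ?scale1r ?mul1r //.
Qed.

Unset Implicit Arguments.
Theorem lemma4p2 (R : realFieldType) (q : R) (hq0 : 0 < q) (hq1 : q < 1)
    (l : nat) (hl : (1 <= l)%N) (A : algType R) (star : A -> A)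
    (z : 'I_l.+1 -> A) (hstar : is_star star) (hrel : qsphere_rel q star z)
    (N : nat) :
  \sum_(j : {ffun 'I_l.+1 -> 'I_N.+1} | (\sum_(i < l.+1) (j i : nat))%N == N)
     qmultinom q (fun i => (j i : nat)) *:
       (zmon z (fun i => (j i : nat)) * star (zmon z (fun i => (j i : nat))))
  = 1.
Proof.
have gen : forall K, (K <= N)%N -> Ssum q star z N K = 1.
  elim=> [|K IH] hK; first exact: main_base.
  by rewrite -main_step // IH // ltnW.
exact: gen.
Qed.
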